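(* Let $A$ be a Banach lattice algebra with identity $e$ and let $p\in BP(A)$. The following are equivalent: (i) $p\in OI(A)$; (ii) $p^2=p$; (iii) $p\in A_e$; (iv) there exists $\lambda>\|p\|$ such that $(\lambda e+p)^{-1}\ge 0$.
   Context: A Banach lattice algebra is a real Banach lattice $A$ with an associative bilinear product making $(A,\cdot)$ a Banach algebra such that $xy\ge0$ whenever $x,y\ge 0$. It has identity $e$ if $e$ is a multiplicative identity with $\|e\|=1$ (such $e$ is automatically positive). $A_e=\{x\in A: |x|\le\lambda e\text{ for some }\lambda\ge0\}$ is the order ideal generated by $e$. $L_a(x)=ax$, $R_a(x)=xa$. A band projection on a Banach lattice $X$ is an operator $P$ with $P^2=P$, $0\le P\le I_X$. $BP(A)=\{a\in A_+: L_aR_a\colon A\to A \text{ is a band projection}\}$. $OI(A)=\{p\in A: p^2=p,\ 0\le p\le e\}$ (order idempotents). For $\lambda>\|p\|$, $\lambda e+p$ is invertible. *)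

(* Defs.v *)
From HB Require Import structures.
From mathcomp Require Import all_boot all_order all_algebra.
From mathcomp Require Import all_classical all_reals all_analysis.
Set Implicit Arguments. Unset Strict Implicit. Unset Printing Implicit Defensive.
Import Order.TTheory GRing.Theory Num.Theory.
Import numFieldNormedType.Exports.
Local Open Scope ring_scope.

(* A (real) Banach lattice algebra with identity, on a real Banach space V
   (complete normed module over a realType R).
   - [ble] is the vector-lattice order, [bjoin] the lattice supremum;
   - |x| := x \/ (-x); lattice norm: |x| <= |y| -> ||x|| <= ||y||;
   - [bmul] is an associative bilinear submultiplicative product,
     positive on positive elements;
   - [bid] is a multiplicative identity of norm 1. *)
Record BanachLatticeAlgebra (R : realType) (V : completeNormedModType R) := {
  ble : V -> V -> Prop;
  ble_refl : forall x, ble x x;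
  ble_trans : forall x y z, ble x y -> ble y z -> ble x z;
  ble_anti : forall x y, ble x y -> ble y x -> x = y;
  ble_add : forall x y z, ble x y -> ble (x + z) (y + z);
  ble_scale : forall (a : R) x y, 0 <= a -> ble x y -> ble (a *: x) (a *: y);
  bjoin : V -> V -> V;
  bjoin_ubl : forall x y, ble x (bjoin x y);
  bjoin_ubr : forall x y, ble y (bjoin x y);
  bjoin_lub : forall x y z, ble x z -> ble y z -> ble (bjoin x y) z;
  blattice_norm : forall x y,
    ble (bjoin x (- x)) (bjoin y (- y)) -> `|x| <= `|y|;
  bmul : V -> V -> V;
  bmulA : forall x y z, bmul x (bmul y z) = bmul (bmul x y) z;
  bmulDl : forall x y z, bmul (x + y) z = bmul x z + bmul y z;
  bmulDr : forall x y z, bmul x (y + z) = bmul x y + bmul x z;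
  bmulZl : forall (a : R) x y, bmul (a *: x) y = a *: bmul x y;
  bmulZr : forall (a : R) x y, bmul x (a *: y) = a *: bmul x y;
  bmul_norm : forall x y, `|bmul x y| <= `|x| * `|y|;
  bmul_pos : forall x y, ble 0 x -> ble 0 y -> ble 0 (bmul x y);
  bid : V;
  bmul1l : forall x, bmul bid x = x;
  bmul1r : forall x, bmul x bid = x;
  bid_norm : `|bid| = 1
}.

Arguments BanachLatticeAlgebra : clear implicits.

Section BLADefs.
Context {R : realType} {V : completeNormedModType R} (A : BanachLatticeAlgebra R V).

Definition babs (x : V) : V := bjoin A x (- x).

Definition is_band_projection (P : V -> V) : Prop :=
  (forall x y, P (x + y) = P x + P y) /\
  (forall (a : R) x, P (a *: x) = a *: P x) /\
  continuous P /\
  (forall x, P (P x) = P x) /\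
  (forall x, ble A 0 x -> ble A 0 (P x) /\ ble A (P x) x).

Definition LR (a : V) : V -> V := fun x => bmul A a (bmul A x a).

Definition BP (a : V) : Prop := ble A 0 a /\ is_band_projection (LR a).

Definition OI (p : V) : Prop :=
  bmul A p p = p /\ ble A 0 p /\ ble A p (bid A).

Definition in_Ae (x : V) : Prop :=
  exists lambda : R, 0 <= lambda /\ ble A (babs x) (lambda *: bid A).

Definition is_inverse (x q : V) : Prop :=
  bmul A x q = bid A /\ bmul A q x = bid A.

End BLADefs.

(* Main.v *)
Require Import Defs.
From HB Require Import structures.
From mathcomp Require Import all_boot all_order all_algebra.
From mathcomp Require Import all_classical all_reals all_analysis.
Import Order.TTheory GRing.Theory Num.Theory.
Import numFieldNormedType.Exports.
Local Open Scope ring_scope.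
Set Implicit Arguments. Unset Strict Implicit.
Lemma archi0 (R : realType) (c : R) : 0 <= c -> (forall n : nat, n%:R * c <= 1) -> c = 0.
Proof.
move=> c0 H; apply/eqP; rewrite eq_le c0 andbT; apply/negP => /negP; rewrite -ltNge => cpos.
have := H (Num.truncn (c^-1)).+1.
have := truncnS_gt (c^-1).
move=> h1 h2.
have : c^-1 * c < (Num.truncn c^-1).+1%:R * c by rewrite ltr_pM2r.
rewrite mulVf ?gt_eqF // => h3.
by move: (lt_le_trans h3 h2); rewrite ltxx.
Qed.

Lemma ac5 (T : zmodType) (x y z u v : T) : x + y + z + (u + v) = x + (u + y) + (v + z).
Proof. by rewrite -!addrA; congr (_ + _); rewrite [RHS]addrCA; congr (_ + _); rewrite addrC addrA. Qed.

Section BLA.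
Variables (R : realType) (V : completeNormedModType R) (A : BanachLatticeAlgebra R V).
Local Notation "x <=: y" := (ble A x y) (at level 70).
Local Notation "x ⊙ y" := (bmul A x y) (at level 40, left associativity).
Local Notation e := (bid A).

Lemma leT x y z : x <=: y -> y <=: z -> x <=: z.
Proof. exact: ble_trans. Qed.

Lemma le_subP x y : x <=: y <-> 0 <=: y - x.
Proof.
split=> H.
  by have := ble_add (-x) H; rewrite subrr.
by have := ble_add x H; rewrite add0r subrK.
Qed.

Lemma le_add2 x y u v : x <=: y -> u <=: v -> x + u <=: y + v.
Proof.
move=> H1 H2; apply: (@leT _ (y + u)); first exact: ble_add.
by have := ble_add y H2; rewrite ![_ + y]addrC.
Qed.

Lemma le_opp x y : x <=: y -> -y <=: -x.
Proof. by move/le_subP=> H; apply/le_subP; rewrite opprK addrC. Qed.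

Lemma le_opp0 x : 0 <=: x -> -x <=: 0.
Proof. by move/le_opp; rewrite oppr0. Qed.

Lemma bmul0l x : 0 ⊙ x = 0.
Proof. by have := bmulZl A 0 0 x; rewrite !scale0r. Qed.
Lemma bmul0r x : x ⊙ 0 = 0.
Proof. by have := bmulZr A 0 x 0; rewrite !scale0r. Qed.
Lemma bmulNl x y : (-x) ⊙ y = - (x ⊙ y).
Proof. by have := bmulZl A (-1) x y; rewrite !scaleN1r. Qed.
Lemma bmulNr x y : x ⊙ (-y) = - (x ⊙ y).
Proof. by have := bmulZr A (-1) x y; rewrite !scaleN1r. Qed.
Lemma bmulBl x y z : (x - y) ⊙ z = x ⊙ z - y ⊙ z.
Proof. by rewrite bmulDl bmulNl. Qed.
Lemma bmulBr x y z : z ⊙ (x - y) = z ⊙ x - z ⊙ y.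
Proof. by rewrite bmulDr bmulNr. Qed.

Lemma mul_le_l c x y : 0 <=: c -> x <=: y -> c ⊙ x <=: c ⊙ y.
Proof. by move=> c0 /le_subP H; apply/le_subP; rewrite -bmulBr; apply: bmul_pos. Qed.
Lemma mul_le_r c x y : 0 <=: c -> x <=: y -> x ⊙ c <=: y ⊙ c.
Proof. by move=> c0 /le_subP H; apply/le_subP; rewrite -bmulBl; apply: bmul_pos. Qed.

Lemma babs_pos x : 0 <=: x -> babs A x = x.
Proof.
move=> x0; apply: ble_anti; last exact: bjoin_ubl.
apply: bjoin_lub; first exact: ble_refl.
exact: (leT (le_opp0 x0) x0).
Qed.

Lemma norm_mono x y : 0 <=: x -> x <=: y -> `|x| <= `|y|.
Proof.
move=> x0 xy; apply: (@blattice_norm _ _ A).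
have y0 : 0 <=: y by apply: leT xy.
by move: (babs_pos x0) (babs_pos y0); rewrite /babs => -> ->.
Qed.

Lemma scale_pos (a : R) x : 0 <= a -> 0 <=: x -> 0 <=: a *: x.
Proof. by move=> a0 x0; have := ble_scale a0 x0; rewrite scaler0. Qed.


Lemma le_addr x y : 0 <=: y -> x <=: x + y.
Proof. by move=> y0; apply/le_subP; rewrite addrC addKr. Qed.

Lemma join_ge0 x : 0 <=: bjoin A x (-x).
Proof.
set z := bjoin A x (-x).
have H : x + -x <=: z + z by apply: le_add2; [exact: bjoin_ubl|exact: bjoin_ubr].
rewrite subrr in H.
have h2 : 0 <= (2%:R:R)^-1 by rewrite invr_ge0 ler0n.
have := scale_pos h2 H.
by rewrite -mulr2n -(scaler_nat 2 z) scalerA mulVf ?pnatr_eq0 // scale1r.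
Qed.

Fixpoint bpow (x : V) (n : nat) : V := if n is n'.+1 then bpow x n' ⊙ x else e.

Lemma bpow_norm x n : `|x| <= 1 -> `|bpow x n| <= 1.
Proof.
move=> x1; elim: n => [|n IH] /=; first by rewrite bid_norm.
apply: le_trans (bmul_norm _ _ _) _.
by apply: mulr_ile1.
Qed.

Lemma e_pos : 0 <=: e.
Proof.
set b := bjoin A e 0.
set a := b - e.
have b0 : 0 <=: b by exact: bjoin_ubr.
have a0 : 0 <=: a by apply/(le_subP e b); exact: bjoin_ubl.
have nb : `|b| <= 1.
  rewrite -(bid_norm A); apply: (@blattice_norm _ _ A).
  have := babs_pos b0; rewrite /babs => ->.
  apply: (@bjoin_lub _ _ A e 0); first exact: bjoin_ubl.
  exact: join_ge0.
have bE : b = e + a by rewrite /a addrC subrK.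
have bb : b ⊙ b = b + a + a ⊙ a.
  rewrite {2}bE bmulDr bmul1r -addrA; congr (_ + _).
  by rewrite bE bmulDl bmul1l.
have ab : a ⊙ b = a + a ⊙ a by rewrite bE bmulDr bmul1r.
have key : forall n : nat, b + n%:R *: a <=: bpow b n.+1.
  elim=> [|n IH]; first by rewrite /= bmul1l scale0r addr0; exact: ble_refl.
  rewrite /=.
  apply: leT (mul_le_r b0 IH).
  have -> : (b + n%:R *: a) ⊙ b = (b + n.+1%:R *: a) + n.+1%:R *: (a ⊙ a).
    rewrite bmulDl bmulZl bb ab -addn1 natrD !scalerDl !scale1r scalerDr.
    exact: ac5.
  apply: le_addr; apply: scale_pos => //; exact: bmul_pos.
have na : `|a| = 0.
  apply: archi0 => // n.
  have h1 : n%:R *: a <=: b + n%:R *: a by rewrite addrC; apply: le_addr.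
  have := norm_mono (scale_pos (ler0n R n) a0) (leT h1 (key n)).
  rewrite normrZ ger0_norm // => h; apply: le_trans h _.
  exact: bpow_norm.
move: b0; rewrite bE (normr0_eq0 na) addr0 //.
Qed.


Lemma half_pos z : 0 <=: z + z -> 0 <=: z.
Proof.
move=> H; have h2 : 0 <= (2%:R:R)^-1 by rewrite invr_ge0 ler0n.
have := scale_pos h2 H.
by rewrite -mulr2n -(scaler_nat 2 z) scalerA mulVf ?pnatr_eq0 // scale1r.
Qed.

Lemma le_scale_e (m1 m2 : R) : m1 <= m2 -> m1 *: e <=: m2 *: e.
Proof.
move=> h; apply/le_subP; rewrite -scalerBl; apply: scale_pos; last exact: e_pos.
by rewrite subr_ge0.
Qed.

Lemma disj_prod x y (m1 m2 : R) : 0 <=: x -> 0 <=: y ->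
  (forall z, z <=: x -> z <=: y -> z <=: 0) ->
  0 < m1 -> 0 < m2 -> x <=: m1 *: e -> y <=: m2 *: e -> x ⊙ y = 0.
Proof.
move=> x0 y0 dxy m10 m20 xm ym.
set nu := m1 + m2.
have nu0 : 0 < nu by rewrite ltr_wpDr // ltW.
have h1 : x ⊙ y <=: nu *: y.
  apply: (@leT _ (m1 *: y)).
    by have := mul_le_r y0 xm; rewrite bmulZl bmul1l.
  apply/le_subP; rewrite -scalerBl; apply: scale_pos => //.
  by rewrite /nu addrC addKr ltW.
have h2 : x ⊙ y <=: nu *: x.
  apply: (@leT _ (m2 *: x)).
    by have := mul_le_l x0 ym; rewrite bmulZr bmul1r.
  apply/le_subP; rewrite -scalerBl; apply: scale_pos => //.
  by rewrite /nu addrK ltW.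
have hinv : 0 <= nu^-1 by rewrite invr_ge0 ltW.
have hz : nu^-1 *: (x ⊙ y) <=: 0.
  apply: dxy.
    have := ble_scale hinv h2.
    by rewrite scalerA mulVf ?gt_eqF // scale1r.
  have := ble_scale hinv h1.
  by rewrite scalerA mulVf ?gt_eqF // scale1r.
have hz0 : 0 <=: nu^-1 *: (x ⊙ y).
  by apply: scale_pos => //; exact: bmul_pos.
have := congr1 (fun v => nu *: v) (ble_anti hz hz0) => /=.
by rewrite scalerA mulfV ?gt_eqF // scale1r scaler0.
Qed.

Lemma pos_neg_disj x z : z <=: bjoin A x 0 -> z <=: bjoin A x 0 - x -> z <=: 0.
Proof.
set xp := bjoin A x 0 => h1 h2.
have w0 : 0 <=: xp - z by apply/(le_subP z xp).
have wx : x <=: xp - z.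
  by apply/(le_subP x (xp - z)); move/(le_subP z (xp - x)): h2; rewrite addrAC.
have : xp <=: xp - z by apply: bjoin_lub.
move/(le_subP xp (xp - z)); rewrite addrAC subrr add0r => /le_opp; rewrite opprK oppr0.
done.
Qed.

Lemma sq_pos x (m1 m2 : R) : 0 < m1 -> 0 < m2 ->
  bjoin A x 0 <=: m1 *: e -> bjoin A x 0 - x <=: m2 *: e -> 0 <=: x ⊙ x.
Proof.
set xp := bjoin A x 0 => m10 m20 h1 h2.
set xn := xp - x.
have xp0 : 0 <=: xp by exact: bjoin_ubr.
have xn0 : 0 <=: xn by apply/(le_subP x xp); exact: bjoin_ubl.
have d1 : xp ⊙ xn = 0.
  by apply: (disj_prod (m1:=m1) (m2:=m2)) => // z; exact: pos_neg_disj.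
have d2 : xn ⊙ xp = 0.
  by apply: (disj_prod (m1:=m2) (m2:=m1)) => // z a b; exact: (pos_neg_disj b a).
have ex : x = xp - xn by rewrite /xn opprB addrC subrK.
clearbody xn xp; subst x.
rewrite bmulBl !bmulBr d1 d2 subr0 sub0r opprK.
have := le_add2 (bmul_pos xp0 xp0) (bmul_pos xn0 xn0); by rewrite addr0.
Qed.


Section Main.
Variable p : V.
Hypothesis hBP : BP A p.

Let p2 := p ⊙ p.
Let p3 := p ⊙ p2.
Let p4 := p ⊙ p3.

Lemma p0 : 0 <=: p.
Proof. by case: hBP. Qed.

Lemma LRE x : LR A p x = p ⊙ (x ⊙ p).
Proof. by []. Qed.

Lemma Pidem x : LR A p (LR A p x) = LR A p x.
Proof. by case: hBP => _ [_ [_ [_ [H _]]]]. Qed.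

Lemma Ppos x : 0 <=: x -> 0 <=: LR A p x /\ LR A p x <=: x.
Proof. by case: hBP => _ [_ [_ [_ [_ H]]]]; apply: H. Qed.

Lemma p2_pos : 0 <=: p2. Proof. exact: bmul_pos p0 p0. Qed.
Lemma p3_pos : 0 <=: p3. Proof. exact: bmul_pos p0 p2_pos. Qed.

Lemma p2p : p2 ⊙ p = p3.
Proof. by rewrite /p3 /p2 bmulA. Qed.

Lemma p4E : p4 = p2.
Proof.
have := Pidem e; rewrite !LRE bmul1l -/p2 p2p.
done.
Qed.

Lemma p3_le : p3 <=: p.
Proof. by have [_] := Ppos p0; rewrite LRE. Qed.

Lemma p2_le_e : p2 <=: e.
Proof. by have [_] := Ppos e_pos; rewrite LRE bmul1l. Qed.


Lemma iii_ii (m : R) : 0 < m -> p <=: m *: e -> p2 = p.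
Proof.
move=> m0 pm.
have pp2 : p - (p - p2) = p2 by rewrite opprB addrC subrK.
have p2m : p2 <=: (m * m) *: e.
  apply: (@leT _ (m *: p)).
    by have := mul_le_l p0 pm; rewrite bmulZr bmul1r.
  by rewrite -scalerA; apply: ble_scale => //; exact: ltW.
have p22 : p2 ⊙ p2 = p4 by rewrite /p4 /p3 /p2 !bmulA.
have p32 : p3 <=: p2.
  set x := p - p2.
  have xle : x <=: p by apply/(le_subP x p); rewrite pp2; exact: p2_pos.
  have h1 : bjoin A x 0 <=: m *: e.
    by apply: leT pm; apply: bjoin_lub => //; exact: p0.
  have h2 : bjoin A x 0 - x <=: (m * m) *: e.
    apply: leT p2m; rewrite -pp2.
    apply: le_add2; last exact: ble_refl.
    by apply: bjoin_lub => //; exact: p0.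
  have := sq_pos m0 (mulr_gt0 m0 m0) h1 h2.
  rewrite /x bmulBl !bmulBr p2p p22 p4E -/p2 -/p3.
  rewrite opprB => H.
  apply/(le_subP p3 p2); apply: half_pos.
  by [].
have p3E : p3 = p2.
  apply: (@ble_anti _ _ A _ _ p32).
  have H : p4 <=: p3 by exact: mul_le_l p0 p32.
  by rewrite p4E in H.
set r := p - p2.
have r0 : 0 <=: r by apply/(le_subP p2 p); rewrite -p3E; exact: p3_le.
have rr : r ⊙ r = 0.
  by rewrite /r bmulBl !bmulBr p2p p22 p4E -/p2 -/p3 p3E subrr.
have rm : r <=: m *: e.
  apply: leT pm; apply/(le_subP r p); rewrite pp2; exact: p2_pos.
have key : forall n : nat, n%:R *: r <=: e.
  move=> n.
  set y := e - n%:R *: r.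
  have nr0 : 0 <=: n%:R *: r by apply: scale_pos.
  have ye : y <=: e by apply/(le_subP y e); rewrite /y opprB addrC subrK.
  have h1 : bjoin A y 0 <=: 1 *: e.
    by rewrite scale1r; apply: bjoin_lub => //; exact: e_pos.
  have h2 : bjoin A y 0 - y <=: (n%:R * m + 1) *: e.
    apply: (@leT _ (e - y)).
      apply: le_add2; last exact: ble_refl.
      by apply: bjoin_lub => //; exact: e_pos.
    rewrite /y opprB addrC subrK.
    apply: (@leT _ ((n%:R * m) *: e)).
      by rewrite -scalerA; apply: ble_scale.
    by apply: le_scale_e; rewrite lerDl.
  have := sq_pos ltr01 (ltr_wpDl (mulr_ge0 (ler0n R n) (ltW m0)) ltr01) h1 h2.
  rewrite /y bmulBl !bmulBr !bmulZl !bmulZr rr !scaler0 !bmul1l bmul1r subr0.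
  move=> H.
  have H2 : n%:R *: r + n%:R *: r <=: e.
    by apply/(le_subP _ e); rewrite opprD addrA.
  apply: leT H2; exact: le_addr.
have nr : `|r| = 0.
  apply: archi0 => // n.
  have := norm_mono (scale_pos (ler0n R n) r0) (key n).
  by rewrite normrZ ger0_norm // bid_norm.
by apply/eqP; rewrite eq_sym -subr_eq0 -/r (normr0_eq0 nr).
Qed.


Lemma p_le_e : p2 = p -> p <=: e.
Proof. by move=> H; have [_] := Ppos e_pos; rewrite LRE bmul1l -/p2 H. Qed.

Lemma iv_iii (l : R) q : 0 < l -> (l *: e + p) ⊙ q = e -> 0 <=: q ->
  p <=: (l + l^-1) *: e.
Proof.
move=> l0 H q0.
have pq0 : 0 <=: p ⊙ q by exact: bmul_pos p0 q0.
have eq1 : e = l *: q + p ⊙ q by rewrite -H bmulDl bmulZl bmul1l.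
have lq : l *: q <=: e by apply/(le_subP (l *: q) e); rewrite {1}eq1 addrC addKr.
have pqe : p ⊙ q <=: e by apply/(le_subP (p ⊙ q) e); rewrite {1}eq1 addrK; exact: scale_pos (ltW l0) q0.
have hinv : 0 <= l^-1 by rewrite invr_ge0 ltW.
have qle : q <=: l^-1 *: e.
  by have := ble_scale hinv lq; rewrite scalerA mulVf ?gt_eqF // scale1r.
have pE : p = l *: (p ⊙ q) + p2 ⊙ q.
  by rewrite -{1}(bmul1r A p) -H bmulA bmulDr bmulZr bmul1r bmulDl bmulZl.
have p2q : p2 ⊙ q <=: q by have := mul_le_r q0 p2_le_e; rewrite bmul1l.
rewrite pE scalerDl; apply: le_add2; first exact: ble_scale (ltW l0) pqe.
exact: leT p2q qle.
Qed.

Lemma ii_iv : p2 = p -> exists l : R, `|p| < l /\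
  exists q : V, is_inverse A (l *: e + p) q /\ 0 <=: q.
Proof.
move=> H.
set l := `|p| + 1.
have l0 : 0 < l by rewrite /l ltr_wpDl.
have l10 : 0 < l + 1 by rewrite ltr_wpDl // ltW.
set c := (l + 1)^-1.
have cE : c * l + c = 1 by rewrite -{2}(mulr1 c) -mulrDr /c mulVf ?gt_eqF.
have k0 : 1 - c * l - c = 0 by rewrite -addrA -opprD cE subrr.
set w := e - c *: p.
have E1 : (l *: e + p) ⊙ w = l *: e.
  rewrite /w bmulBr bmulDl bmulZl bmul1l bmul1r !bmulZr bmulDl bmulZl bmul1l -/p2 H.
  have -> : l *: e + p - c *: (l *: p + p) = l *: e + (1 - c * l - c) *: p.
    by rewrite scalerDr !scalerBl scale1r scalerA opprD !addrA.
  by rewrite k0 scale0r addr0.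
have E2 : w ⊙ (l *: e + p) = l *: e.
  rewrite /w bmulBl bmul1l bmulZl bmulDr bmulZr bmul1r -/p2 H.
  have -> : l *: e + p - c *: (l *: p + p) = l *: e + (1 - c * l - c) *: p.
    by rewrite scalerDr !scalerBl scale1r scalerA opprD !addrA.
  by rewrite k0 scale0r addr0.
exists l; split; first by rewrite /l ltrDl.
exists (l^-1 *: w); split; first split.
- by rewrite bmulZr E1 scalerA mulVf ?gt_eqF // scale1r.
- by rewrite bmulZl E2 scalerA mulVf ?gt_eqF // scale1r.
apply: scale_pos; first by rewrite invr_ge0 ltW.
apply/(le_subP (c *: p) e); apply: (leT _ (p_le_e H)).
apply/(le_subP (c *: p) p); rewrite -{1}(scale1r p) -scalerBl.
apply: scale_pos p0; rewrite subr_ge0 /c invf_le1 // lerDr ltW //.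
Qed.

End Main.
End BLA.

Unset Implicit Arguments.
Set Strict Implicit.

Theorem mainTheorem4 (R : realType) (V : completeNormedModType R)
  (A : BanachLatticeAlgebra R V) (p : V) :
  BP A p ->
  (OI A p <-> bmul A p p = p) /\
  (bmul A p p = p <-> in_Ae A p) /\
  (in_Ae A p <->
     exists lambda : R, `|p| < lambda /\
       exists q : V, is_inverse A (lambda *: bid A + p) q /\ ble A 0 q).
Proof.
move=> hBP.
have hp0 := p0 hBP.
have ii_i : bmul A p p = p -> OI A p.
  move=> H; split=> //; split=> //; exact: p_le_e hBP H.
have ii_iii : bmul A p p = p -> in_Ae A p.
  move=> H; exists 1; split; first exact: ler01.
  by rewrite babs_pos // scale1r; exact: p_le_e hBP H.
have iii_ii' : in_Ae A p -> bmul A p p = p.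
  case=> l [l0 hl]; rewrite babs_pos // in hl.
  apply: (iii_ii hBP (m := l + 1)); first by rewrite ltr_wpDl.
  apply: leT hl _; apply: le_scale_e; rewrite lerDl //.
split; first by split; [case | exact: ii_i].
split; first by split; [exact: ii_iii | exact: iii_ii'].
split.
  by move/iii_ii'; exact: ii_iv hBP.
case=> l [hl [q [[h1 h2] q0]]].
have l0 : 0 < l by apply: le_lt_trans hl.
exists (l + l^-1); split.
  by rewrite addr_ge0 // ?invr_ge0 ltW.
rewrite babs_pos //; exact: (iv_iii hBP l0 h1 q0).
Qed.
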